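(* Let $\theta\in\mathrm{Irr}(N)$, let $N\le K\le\mathrm{Stab}_G(\theta)$, and let $\hat\theta$ be a strong extension of $\theta$ to $K$. Then for every $x\in K$ there exists $n\in N$ such that $\hat\theta(xn)\neq0$. Consequently, if $N\le L\le\mathrm{Stab}_G(\tilde\theta)$ normalises $K$, $g\in L$, $\psi_g\in\mathrm{Lin}(G)$ satisfies ${}^g\theta=\theta\,\psi_g|_N$, and $\mu:K\to\mathbb{C}^\times$ is a function constant on cosets of $N$ with ${}^g\hat\theta=\hat\theta\cdot\psi_g|_K\cdot\mu$, then $\mu$ is uniquely determined by $gN$, $\hat\theta$ and $\psi_g|_K$.
   Context: $G$ is a profinite group, $N$ an open normal subgroup; $\mathrm{Irr}$ and $\mathrm{Lin}$ denote continuous irreducible, resp. degree-one, complex characters. $\tilde\theta$ denotes the $G$-twist class $\{\theta\psi|_N:\psi\in\mathrm{Lin}(G)\}$ of $\theta\in\mathrm{Irr}(N)$, and $G$ acts on these classes via conjugation ${}^g\theta(n)=\theta(g^{-1}ng)$. A projective representation of $K$ is a map $\Pi:K\to\mathrm{GL}_m(\mathbb{C})$ with $\Pi(x)\Pi(y)=\alpha(x,y)\Pi(xy)$ for a 2-cocycle $\alpha:K\times K\to\mathbb{C}^\times$ (its factor set); its projective character is $x\mapsto\mathrm{Tr}\,\Pi(x)$. If $\Theta$ is a representation of $N$ affording $\theta$ and $K$ fixes $\theta$, a strong extension of $\Theta$ to $K$ is a projective representation $\Pi$ of $K$ with $\Pi(xn)=\Pi(x)\Theta(n)$ and $\Pi(nx)=\Theta(n)\Pi(x)$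 for all $x\in K$, $n\in N$; a strong extension of $\theta$ to $K$ is the projective character of such a $\Pi$. For a function $f$ on $K$, ${}^gf(x)=f(g^{-1}xg)$; products of functions are pointwise. *)

(* Defs.v *)
From HB Require Import structures.
From mathcomp Require Import all_boot all_order all_algebra.
From mathcomp Require Import all_classical all_reals topology normedtype.
From mathcomp Require Import complex.
Set Implicit Arguments. Unset Strict Implicit. Unset Printing Implicit Defensive.
Import Order.TTheory GRing.Theory Num.Theory.
Import numFieldTopology.Exports numFieldNormedType.Exports.
Local Open Scope ring_scope.
Local Open Scope classical_set_scope.
Local Open Scope complex_scope.

(* The complex numbers: R[i] for a realType R, viewed through the regular-
   algebra alias ^o so that it carries its (modulus) metric topology. *)
Notation Cplx R := ((complex R)^o).

Record profiniteGroup := ProfiniteGroup {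
  pg_carrier :> topologicalType;
  pg_mul : pg_carrier -> pg_carrier -> pg_carrier;
  pg_inv : pg_carrier -> pg_carrier;
  pg_one : pg_carrier;
  pg_mulA : forall x y z, pg_mul x (pg_mul y z) = pg_mul (pg_mul x y) z;
  pg_mul1 : forall x, pg_mul pg_one x = x;
  pg_mulV : forall x, pg_mul (pg_inv x) x = pg_one;
  pg_mul_cont : continuous (fun p : pg_carrier * pg_carrier => pg_mul p.1 p.2);
  pg_inv_cont : continuous pg_inv;
  pg_compact : compact [set: pg_carrier];
  pg_hausdorff : hausdorff_space pg_carrier;
  pg_tdisc : totally_disconnected [set: pg_carrier]
}.

Declare Scope pg_scope.
Section Defs.
Variable G : profiniteGroup.
Local Notation "x * y" := (pg_mul x y) : pg_scope.
Local Notation "x ^-1" := (pg_inv x) : pg_scope.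
Delimit Scope pg_scope with pg.

Definition is_subgroup (H : set G) : Prop :=
  [/\ H (pg_one G),
      (forall x y, H x -> H y -> H (x * y)%pg) &
      (forall x, H x -> H (x^-1)%pg)].

Definition is_normal (N : set G) : Prop :=
  is_subgroup N /\ (forall g n, N n -> N ((g^-1) * n * g)%pg).

Definition is_open_normal (N : set G) : Prop := open N /\ is_normal N.

Definition conjf (T : Type) (g : G) (f : G -> T) : G -> T :=
  fun x => f ((g^-1) * x * g)%pg.

Variable R : realType.
Local Notation C := (Cplx R).

(* A continuous (finite-dimensional, complex) representation of the
   subgroup H, given as a map on G of which only the values on H matter. *)
Definition is_cont_rep (H : set G) (m : nat) (Theta : G -> 'M[C]_m) : Prop :=
  [/\ {within H, continuous Theta},
      Theta (pg_one G) = 1%:M &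
      (forall x y, H x -> H y -> Theta (x * y)%pg = Theta x *m Theta y)].

Definition is_irr_rep (H : set G) (m : nat) (Theta : G -> 'M[C]_m) : Prop :=
  [/\ is_cont_rep H Theta, (0 < m)%N &
      forall U : 'M[C]_m, (forall h, H h -> (U *m Theta h <= U)%MS) ->
        U = 0 \/ (U == 1%:M)%MS].

Definition afforded (m : nat) (Theta : G -> 'M[C]_m) : G -> C :=
  fun x => \tr (Theta x).

Definition is_lin_char (psi : G -> C) : Prop :=
  [/\ continuous psi, psi (pg_one G) = 1 &
      forall x y, psi (x * y)%pg = psi x * psi y].

Definition is_proj_rep (K : set G) (m : nat) (Pi : G -> 'M[C]_m)
    (alpha : G -> G -> C) : Prop :=
  [/\ (forall x, K x -> Pi x \in unitmx),
      (forall x y, K x -> K y -> alpha x y != 0),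
      (forall x y z, K x -> K y -> K z ->
          alpha x y * alpha (x * y)%pg z = alpha y z * alpha x (y * z)%pg) &
      (forall x y, K x -> K y -> Pi x *m Pi y = alpha x y *: Pi (x * y)%pg)].

Definition is_strong_ext (N K : set G) (m : nat) (Theta Pi : G -> 'M[C]_m) :=
  (exists alpha, is_proj_rep K Pi alpha) /\
  (forall x n, K x -> N n ->
     Pi (x * n)%pg = Pi x *m Theta n /\ Pi (n * x)%pg = Theta n *m Pi x).

Definition stab (N : set G) (theta : G -> C) : set G :=
  [set g | forall n, N n -> conjf g theta n = theta n].

Definition stab_twist (N : set G) (theta : G -> C) : set G :=
  [set g | exists psi, is_lin_char psi /\
     (forall n, N n -> conjf g theta n = theta n * psi n)].

End Defs.

(* Main.v *)
Require Import Defs.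
From HB Require Import structures.
From mathcomp Require Import all_boot all_order all_algebra.
From mathcomp Require Import all_classical all_reals topology normedtype.
From mathcomp Require Import complex.
Import Order.TTheory GRing.Theory Num.Theory.
Import numFieldTopology.Exports numFieldNormedType.Exports.
Local Open Scope ring_scope.
Local Open Scope classical_set_scope.
Local Open Scope complex_scope.

From Stdlib Require Import Classical.
From mathcomp Require Import zify.
Section Span.
Variables (F : fieldType) (m : nat).
Variable S : 'rV[F]_m -> Prop.
Hypothesis S0 : S 0.
Hypothesis SD : forall u v, S u -> S v -> S (u + v).
Hypothesis SZ : forall a u, S u -> S (a *: u).

Lemma span_aux d : forall k (U : 'M[F]_(k, m)), (forall i, S (row i U)) ->
  (m - \rank U <= d)%N ->
  exists k' (U' : 'M[F]_(k', m)), (forall i, S (row i U')) /\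
     forall v, S v -> (v <= U')%MS.
Proof.
elim: d => [|d IH] k U SU hd.
  exists k, U; split => // v Sv; apply: submx_full.
  by rewrite -col_leq_rank -subn_eq0 -leqn0.
case: (classic (exists v, S v /\ ~~ (v <= U)%MS)) => [[v [Sv nvU]]|hn]; last first.
  exists k, U; split => // v Sv; apply/negPn/negP => nv; apply: hn; by exists v.
apply: (IH _ (col_mx U v)).
  move=> i; rewrite -(fintype.splitK i); case: (fintype.split i) => j /=.
    by rewrite rowKu.
  by rewrite rowKd [j]ord1; have -> : row 0 v = v by apply/rowP => z; rewrite mxE.
have lt : (\rank U < \rank (col_mx U v))%N.
  rewrite -addsmxE; apply: rank_ltmx; rewrite ltmxE addsmxSl /=.
  by apply/negP => h; move: nvU; rewrite (submx_trans (addsmxSr U v) h).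
have := rank_leq_col (col_mx U v).
move: lt hd; set a := \rank U; set b := \rank _ => lt hd lc.
lia.
Qed.

Lemma span_pred : exists k (U : 'M[F]_(k, m)), forall v, S v <-> (v <= U)%MS.
Proof.
have [k [U [SU hU]]] := @span_aux m 0 (0 : 'M_(0, m)) (fun i => match i with Ordinal _ h => False_ind _ (notF h) end) (leq_subr _ _).
exists k, U => v; split; first exact: hU.
case/submxP => D ->; rewrite mulmx_sum_row.
elim/big_ind: _ => // i _; exact: SZ.
Qed.
End Span.
Section Burn.
Variables (F : closedFieldType) (m : nat) (E : 'M[F]_m -> Prop).
Hypothesis ED : forall A B, E A -> E B -> E (A + B).
Hypothesis EZ : forall a A, E A -> E (a *: A).
Hypothesis EM : forall A B, E A -> E B -> E (A *m B).
Hypothesis E1 : E 1%:M.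
Hypothesis Htrans : forall u : 'rV[F]_m, u != 0 -> forall v, exists2 X, E X & u *m X = v.

Lemma nz_row (T : 'M[F]_m) : T != 0 -> exists i, row i T != 0.
Proof.
move=> nT; apply: NNPP => h; move/negP: nT; apply; apply/eqP/row_matrixP => i.
rewrite row0; apply: NNPP => h2; apply: h; exists i; exact/eqP.
Qed.

Lemma rank_one_in_aux r : forall T, E T -> T != 0 -> \rank T = r ->
  exists T1, E T1 /\ \rank T1 = 1%N.
Proof.
elim/ltn_ind: r => r IH T ET nT rT.
case: (ltngtP r 1) => [r0|r2|r1]; last by exists T; rewrite rT r1.
  by move: nT; rewrite -mxrank_eq0 rT; case: r r0 {IH rT}.
have [i1 ni1] := @nz_row T nT.
have [i2 ni2] : exists i2, ~~ (row i2 T <= row i1 T)%MS.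
  apply: NNPP => h; have : (T <= row i1 T)%MS.
    apply/row_subP => i; apply: NNPP => h2; apply: h; exists i; exact/negP.
  move/mxrank_leqif_sup => /= [+ _]; rewrite rank_rV ni1 rT => h3.
  by move: r2; rewrite ltnNge h3.
have [A EA hA] := @Htrans (row i1 T) ni1 (delta_mx 0 i2).
set B := row_base T.
set M' := B *m (A *m T) *m pinvmx B.
have hBM : B *m (A *m T) = M' *m B.
  rewrite mulmxKpV // mulmxA (submx_trans (submxMl _ T)) //.
  by rewrite /B eq_row_base.
have [lam hlam] : exists lam, root (char_poly M') lam.
  by apply/closed_rootP; rewrite size_char_poly rT; case: r r2 {IH rT hBM M' B}.
move: hlam; rewrite -eigenvalue_root_char => /eigenvalueP [c hc nc].
set T' := T *m A *m T + (- lam) *: T.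
have ET' : E T' by apply: ED; [apply: EM => //; apply: EM | apply: EZ].
have nT' : T' != 0.
  apply/negP => /eqP h; move: ni2.
  have : (delta_mx 0 i1 : 'rV[F]_m) *m T' = 0 by rewrite h mulmx0.
  rewrite /T' mulmxDr !mulmxA -scalemxAr -!rowE hA -rowE.
  move/eqP; rewrite addr_eq0 => /eqP ->.
  by rewrite scaleNr opprK scalemx_sub.
have lt : (\rank T' < r)%N.
  have -> : T' = T *m (A *m T + (- lam)%:M).
    by rewrite mulmxDr mul_mx_scalar mulmxA.
  rewrite -(eqmxMr _ (eq_row_base T)) -/B mulmxDr mul_mx_scalar hBM.
  rewrite -mul_scalar_mx -mulmxDl.
  apply: leq_ltn_trans (mxrankM_maxl _ _) _.
  rewrite -rT ltn_neqAle rank_leq_col andbT.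
  apply/negP => /eqP h.
  have : row_free (M' + (- lam)%:M) by rewrite /row_free h.
  rewrite row_free_unit => hu; move: nc.
  have : c *m (M' + (- lam)%:M) = 0 by rewrite mulmxDr hc mul_mx_scalar scaleNr subrr.
  by move/(congr1 (mulmx^~ (invmx (M' + (- lam)%:M)))); rewrite mulmxK // mul0mx => ->; rewrite eqxx.
exact: (IH _ lt T').
Qed.


Lemma burnside_tr (A : 'M[F]_m) : (0 < m)%N -> A \in unitmx ->
  (forall X, E X -> \tr (A *m X) = 0) -> False.
Proof.
move=> m0 uA hA.
have [T [ET rT]] : exists T1, E T1 /\ \rank T1 = 1%N.
  apply: (@rank_one_in_aux m 1%:M E1) => //.
    by rewrite -mxrank_eq0 mxrank1 -lt0n.
  by rewrite mxrank1.
have nT : T != 0 by rewrite -mxrank_eq0 rT.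
have [i0 ni0] := @nz_row T nT.
set v := row i0 T.
have : (T <= v)%MS.
  have := mxrank_leqif_sup (row_sub i0 T) => -[_ <-].
  by rewrite rank_rV ni0 rT.
case/submxP => D hD.
have hw : forall w : 'rV[F]_m, w *m (A *m D) = 0.
  move=> w; have [Y EY hY] := @Htrans v ni0 w.
  have := hA _ (EM _ _ ET EY); rewrite hD -!mulmxA mulmxA mxtrace_mulC hY.
  rewrite /mxtrace big_ord1 => h; apply/matrixP => i j; rewrite !ord1 h mxE.
  done.
have AD0 : A *m D = 0.
  by apply/row_matrixP => i; rewrite row0 rowE hw.
move: nT; rewrite hD.
have -> : D = 0 by rewrite -(mulKmx uA D) AD0 mulmx0.
by rewrite mul0mx eqxx.
Qed.
End Burn.

Section Trans.
Variables (F : fieldType) (m : nat) (E Gen : 'M[F]_m -> Prop).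
Hypothesis ED : forall A B, E A -> E B -> E (A + B).
Hypothesis EZ : forall a A, E A -> E (a *: A).
Hypothesis E1 : E 1%:M.
Hypothesis EMg : forall A B, E A -> Gen B -> E (A *m B).
Hypothesis irr : forall U : 'M[F]_m, (forall Y, Gen Y -> (U *m Y <= U)%MS) ->
  U = 0 \/ (U == 1%:M)%MS.

Lemma trans_of_irr (u : 'rV[F]_m) : u != 0 -> forall v, exists2 X, E X & u *m X = v.
Proof.
move=> nu v.
pose S w := exists2 X, E X & u *m X = w.
have S0 : S 0 by exists (0 *: 1%:M); [exact: EZ | rewrite scale0r mulmx0].
have SD : forall a b, S a -> S b -> S (a + b).
  by move=> a b [X EX <-] [Y EY <-]; exists (X + Y); [exact: ED | rewrite mulmxDr].
have SZ : forall c a, S a -> S (c *: a).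
  by move=> c a [X EX <-]; exists (c *: X); [exact: EZ | rewrite scalemxAr].
have [k [U hU]] := @span_pred F m S S0 SD SZ.
have inv : forall Y, Gen Y -> (<<U>>%MS *m Y <= <<U>>)%MS.
  move=> Y GY; rewrite (eqmxMr _ (genmxE U)) genmxE.
  apply/row_subP => i; rewrite row_mul; apply/hU.
  have [X EX hX] : S (row i U) by apply/hU; exact: row_sub.
  by exists (X *m Y); [exact: EMg | rewrite mulmxA hX].
have Su : S u by exists 1%:M; rewrite ?mulmx1.
case: (irr _ inv) => [h|h].
  move: nu; have : (u <= <<U>>)%MS by rewrite genmxE; apply/hU.
  by rewrite h submx0 => ->.
apply/hU; rewrite -genmxE; apply: submx_trans (submx1 _) _.
rewrite -(genmxE U); move/eqmxP: h => ->; exact: submx_refl.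
Qed.
End Trans.

Section GroupFacts.
Variable G : profiniteGroup.
Local Notation "x * y" := (pg_mul x y).
Local Notation "x ^-1" := (pg_inv x).

Lemma pg_mulgV (x : G) : x * x^-1 = pg_one G.
Proof.
rewrite -[x * x^-1]pg_mul1 -(pg_mulV (x^-1)) -pg_mulA (pg_mulA (x^-1)).
by rewrite pg_mulV pg_mul1 pg_mulV.
Qed.

Lemma pg_mulg1 (x : G) : x * pg_one G = x.
Proof. by rewrite -(pg_mulV x) pg_mulA pg_mulgV pg_mul1. Qed.

Lemma pg_invE (u w : G) : u * w = pg_one G -> u = w^-1.
Proof.
move=> h; by rewrite -[u]pg_mulg1 -(pg_mulgV w) pg_mulA h pg_mul1.
Qed.

Lemma pg_invM (a b : G) : (a * b)^-1 = b^-1 * a^-1.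
Proof.
symmetry; apply: pg_invE.
by rewrite -pg_mulA (pg_mulA (a^-1)) pg_mulV pg_mul1 pg_mulV.
Qed.

Lemma pg_mulVKg (x y : G) : x * (x^-1 * y) = y.
Proof. by rewrite pg_mulA pg_mulgV pg_mul1. Qed.

Lemma pg_invK (a : G) : (a^-1)^-1 = a.
Proof. by symmetry; apply: pg_invE; rewrite pg_mulgV. Qed.
End GroupFacts.

Inductive gen_span (F : fieldType) (m : nat) (P : 'M[F]_m -> Prop) : 'M[F]_m -> Prop :=
| gs_gen X : P X -> gen_span F m P X
| gs_add X Y : gen_span F m P X -> gen_span F m P Y -> gen_span F m P (X + Y)
| gs_scale a X : gen_span F m P X -> gen_span F m P (a *: X).
Arguments gen_span {F m} P _.
Arguments gs_gen {F m P} X _.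
Arguments gs_add {F m P} X Y _ _.
Arguments gs_scale {F m P} a X _.

Lemma gen_span_mulr (F : fieldType) (m : nat) (P : 'M[F]_m -> Prop) X Y :
  (forall A B, P A -> P B -> P (A *m B)) ->
  gen_span P X -> P Y -> gen_span P (X *m Y).
Proof.
move=> PM; elim => [A PA|A B _ hA _ hB|a A _ hA] PY.
- by apply: gs_gen; apply: PM.
- by rewrite mulmxDl; apply: gs_add; [apply: hA | apply: hB].
- by rewrite -scalemxAl; apply: gs_scale; apply: hA.
Qed.

Lemma gen_span_mul (F : fieldType) (m : nat) (P : 'M[F]_m -> Prop) X Y :
  (forall A B, P A -> P B -> P (A *m B)) ->
  gen_span P X -> gen_span P Y -> gen_span P (X *m Y).
Proof.
move=> PM hX; elim => [A PA|A B _ hA _ hB|a A _ hA].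
- exact: gen_span_mulr.
- by rewrite mulmxDr; apply: gs_add.
- by rewrite -scalemxAr; apply: gs_scale.
Qed.

Theorem lemma2p6 (R : realType) (G : profiniteGroup) (N K : set G) (m : nat)
  (Theta Pi : G -> 'M[Cplx R]_m) :
  is_open_normal N ->
  is_irr_rep N Theta ->
  is_subgroup K -> N `<=` K -> K `<=` stab N (afforded Theta) ->
  is_strong_ext N K Theta Pi ->
  (forall x, K x -> exists n, N n /\ afforded Pi (pg_mul x n) != 0) /\
  (forall (L : set G) (g1 g2 : G) (psi1 psi2 mu1 mu2 : G -> Cplx R),
     is_subgroup L -> N `<=` L -> L `<=` stab_twist N (afforded Theta) ->
     (forall l k, L l -> K k -> K (pg_mul (pg_mul (pg_inv l) k) l)) ->
     L g1 -> L g2 -> N (pg_mul (pg_inv g1) g2) ->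
     is_lin_char psi1 -> is_lin_char psi2 ->
     (forall x, K x -> psi1 x = psi2 x) ->
     (forall n, N n -> conjf g1 (afforded Theta) n = afforded Theta n * psi1 n) ->
     (forall n, N n -> conjf g2 (afforded Theta) n = afforded Theta n * psi2 n) ->
     (forall x, K x -> mu1 x != 0) -> (forall x, K x -> mu2 x != 0) ->
     (forall x n, K x -> N n -> mu1 (pg_mul x n) = mu1 x) ->
     (forall x n, K x -> N n -> mu2 (pg_mul x n) = mu2 x) ->
     (forall x, K x ->
        conjf g1 (afforded Pi) x = afforded Pi x * psi1 x * mu1 x) ->
     (forall x, K x ->
        conjf g2 (afforded Pi) x = afforded Pi x * psi2 x * mu2 x) ->
     forall x, K x -> mu1 x = mu2 x).
Proof.
move=> [_ [[N1 NM NV] _]] [[_ Th1 ThM] m0 irr] [K1 KM KV] NK KS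
  [[alpha [PiU _ _ _]] hPi].
pose P := fun X : 'M[Cplx R]_m => exists n, N n /\ X = Theta n.
pose E := gen_span P.
have PM : forall A B, P A -> P B -> P (A *m B).
  move=> A B [n [Nn ->]] [n' [Nn' ->]]; exists (pg_mul n n'); split; first exact: NM.
  by rewrite ThM.
have ED : forall A B, E A -> E B -> E (A + B) by move=> A B; apply: gs_add.
have EZ : forall a A, E A -> E (a *: A) by move=> a A; apply: gs_scale.
have EM : forall A B, E A -> E B -> E (A *m B) by move=> A B; apply: gen_span_mul.
have EMg : forall A B, E A -> P B -> E (A *m B) by move=> A B; apply: gen_span_mulr.
have E1 : E 1%:M by apply: gs_gen; exists (pg_one G); split.
have irr' : forall U : 'M[Cplx R]_m, (forall Y, P Y -> (U *m Y <= U)%MS) ->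
    U = 0 \/ (U == 1%:M)%MS.
  move=> U hU; apply: irr => h Nh; apply: hU; by exists h.
have Htr := @trans_of_irr _ m E P ED EZ E1 EMg irr'.
have part1 : forall x, K x -> exists n, N n /\ afforded Pi (pg_mul x n) != 0.
  move=> x Kx; apply: NNPP => hn.
  apply: (@burnside_tr _ m E ED EZ EM E1 Htr (Pi x) m0 (PiU x Kx)).
  move=> X; elim => [A [n [Nn ->]]|A B _ hA _ hB|a A _ hA].
  - have [h1 _] := hPi x n Kx Nn.
    rewrite -h1; apply: NNPP => h; apply: hn; exists n; split => //; exact/eqP.
  - by rewrite mulmxDr mxtraceD hA hB addr0.
  - by rewrite -scalemxAr mxtraceZ hA mulr0.
split => //.
move=> L g1 g2 psi1 psi2 mu1 mu2 _ _ _ Lnorm Lg1 Lg2 Nh _ [_ p21 p2M] ps12 _ _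
  nm1 nm2 m1N m2N c1 c2 x Kx.
have [n [Nn nz]] := part1 x Kx.
rewrite -(m1N x n Kx Nn) -(m2N x n Kx Nn).
set y := pg_mul x n.
have Ky : K y := KM _ _ Kx (NK _ Nn).
set h := pg_mul (pg_inv g1) g2.
set z := pg_mul (pg_mul (pg_inv g1) y) g1.
have Kz : K z := Lnorm g1 y Lg1 Ky.
have e2 : pg_mul (pg_mul (pg_inv g2) y) g2 = pg_mul (pg_mul (pg_inv h) z) h.
  by rewrite /h /z pg_invM pg_invK -!pg_mulA !pg_mulVKg.
have NhV : N (pg_inv h) := NV _ Nh.
have tr_eq : afforded Pi (pg_mul (pg_mul (pg_inv h) z) h) = afforded Pi z.
  rewrite /afforded -pg_mulA.
  have Kzh : K (pg_mul z h) := KM _ _ Kz (NK _ Nh).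
  have [_ ->] := hPi _ _ Kzh NhV.
  have [-> _] := hPi _ _ Kz Nh.
  by rewrite mxtrace_mulC -mulmxA -ThM // pg_mulgV Th1 mulmx1.
have hc : conjf g1 (afforded Pi) y = conjf g2 (afforded Pi) y.
  by rewrite /conjf e2 tr_eq.
have p2nz : psi2 y != 0.
  apply/negP => /eqP h0.
  have := p2M (pg_inv y) y; rewrite pg_mulV p21 h0 mulr0 => /eqP.
  by rewrite oner_eq0.
have nz' : afforded Pi y * psi2 y != 0 by rewrite mulf_neq0.
have := c1 y Ky; rewrite hc c2 // ps12 // -!mulrA.
by move/(mulfI nz) => /(mulfI p2nz).
Qed.
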